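(* Let $k, l \geq 1$ be integers. Suppose that some set $E_0$ of edges of the Cartesian product $C_{2k+1} \square C_{2l+1}$ is precolored using colors from a set of at most $5$ colors, such that the distance between any two edges of $E_0$ is at least three. Then this precoloring is extendable, i.e. there is a proper edge coloring of $C_{2k+1} \square C_{2l+1}$ with $\chi'(C_{2k+1} \square C_{2l+1})$ colors in which every edge of $E_0$ receives its prescribed color.
   Context: $C_n$ is the cycle on $n$ vertices. The Cartesian product $G \square H$ has vertex set $V(G)\times V(H)$, with $(u_1,u_2)$ adjacent to $(v_1,v_2)$ iff either $u_1=v_1$ and $u_2v_2 \in E(H)$, or $u_2=v_2$ and $u_1v_1\in E(G)$. The distance between vertices is the length of a shortest path between them, and the distance between edges $xy$ and $zw$ is $\min\{d(x,z),d(x,w),d(y,z),d(y,w)\}$. $\chi'$ denotes the chromatic index. *)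

(* Defs.v *)
From mathcomp Require Import all_boot.
Set Implicit Arguments. Unset Strict Implicit. Unset Printing Implicit Defensive.

(* Simple graphs on a finType T given by a symmetric
   irreflexive relation; edges are 2-element vertex sets. *)

Definition cyc_adj (n : nat) (i j : 'I_n) : bool :=
  (val j == (val i).+1 %% n) || (val i == (val j).+1 %% n).

Definition cart_adj (m n : nat) (u v : 'I_m * 'I_n) : bool :=
  ((u.1 == v.1) && cyc_adj u.2 v.2) || ((u.2 == v.2) && cyc_adj u.1 v.1).

Section Graph.
Variable T : finType.
Variable adj : rel T.

Definition is_edge (e : {set T}) : bool :=
  [exists x, exists y, adj x y && (e == [set x; y])].

Definition edges : {set {set T}} := [set e | is_edge e].

Fixpoint dist_le (n : nat) (x y : T) : bool :=
  if n is n'.+1 then dist_le n' x y || [exists z, adj x z && dist_le n' z y]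
  else x == y.

Definition edge_dist_ge (d : nat) (e f : {set T}) : bool :=
  [forall x in e, forall y in f, ~~ dist_le d.-1 x y].

Definition proper_edge_coloring (c : {set T} -> nat) : Prop :=
  forall e f, is_edge e -> is_edge f -> e != f -> e :&: f != set0 -> c e != c f.

Definition edge_colorable (k : nat) : Prop :=
  exists c : {set T} -> nat, proper_edge_coloring c /\ size (undup [seq c e | e <- enum edges]) <= k.

Definition is_chromatic_index (chi : nat) : Prop :=
  edge_colorable chi /\ forall k, edge_colorable k -> chi <= k.

End Graph.

(* Main.v *)
Require Import Defs.
From mathcomp Require Import all_boot zify.
Set Implicit Arguments. Unset Strict Implicit. Unset Printing Implicit Defensive.


Definition cls (M z : nat) : nat :=
  if z == 0 then 0 else if z == M - 1 then 3 else if z %% 2 == 1 then 1 else 2.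

Definition Bcol (k : bool) (c1 c2 : nat) : nat :=
  if k then (if c1 == 3 then (if c2 == 0 then 3 else if c2 == 3 then 2 else 4)
             else (if c1 == 1 then 1 else 0))
  else (if c2 == 3 then (if c1 == 0 then 1 else if c1 == 3 then 0 else 4)
        else (if c2 == 1 then 3 else 2)).

Definition BB (M N : nat) (k : bool) (x y : nat) : nat := Bcol k (cls M x) (cls N y).

Definition pr (M x : nat) := (x + M.-1) %% M.
Definition sc (M x : nat) := x.+1 %% M.
Definition w (M a d : nat) := (a + d + (M - 2)) %% M.

Definition Npat (k : bool) : seq (nat * nat) :=
  if k then [:: (2,2);(3,2);(1,2);(4,2);(2,1);(2,3);(3,1);(3,3)]
  else [:: (2,2);(2,3);(2,1);(2,4);(1,2);(3,2);(1,3);(3,3)].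

Definition Nverts (M N : nat) (k0 : bool) (a b : nat) : seq (nat * nat) :=
  [seq (w M a d.1, w N b d.2) | d <- Npat k0].

Definition ep2 (M N : nat) (k : bool) (x y : nat) : nat * nat :=
  if k then (sc M x, y) else (x, sc N y).

Definition innerv (M N : nat) (Nv : seq (nat * nat)) (k : bool) (x y : nat) : bool :=
  ((x, y) \in Nv) && (ep2 M N k x y \in Nv).

Definition inN (M N : nat) (k0 : bool) (a b x y : nat) : bool := (x, y) \in Nverts M N k0 a b.

Definition inner (M N : nat) (k0 : bool) (a b : nat) : bool -> nat -> nat -> bool :=
  innerv M N (Nverts M N k0 a b).

Definition vproper (M N : nat) (col : bool -> nat -> nat -> nat) (x y : nat) : bool :=
  uniq [:: col true x y; col true (pr M x) y; col false x y; col false x (pr N y)].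

Definition code := (bool * nat * nat)%type.

Definition incc (M N : nat) (x y : nat) : seq code :=
  [:: (true, x, y); (true, pr M x, y); (false, x, y); (false, x, pr N y)].

Definition allcodes (M N : nat) : seq code :=
  [seq (k, p.1, p.2) | k <- [:: true; false], p <- [seq (x, y) | x <- iota 0 M, y <- iota 0 N]].

Definition col_of (M N : nat) (asg : seq (code * nat)) (k : bool) (x y : nat) : nat :=
  match [seq p.2 | p <- asg & p.1 == (k, x, y)] with
  | c :: _ => c
  | [::] => BB M N k x y
  end.

Definition consistent (M N : nat) (inl : seq code) (t : code) (c : nat)
   (asg : seq (code * nat)) : bool :=
  let: (k, x, y) := t in
  let e2 := ep2 M N k x y in
  all (fun u => (u == t) ||
        match [seq p.2 | p <- asg & p.1 == u] with
        | c' :: _ => c' != c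
        | [::] => (u \in inl) || (BB M N u.1.1 u.1.2 u.2 != c)
        end) (incc M N x y ++ incc M N e2.1 e2.2).

Fixpoint dfs (M N : nat) (inl : seq code) (allowed : code -> seq nat)
   (todo : seq code) (asg : seq (code * nat)) : option (seq (code * nat)) :=
  match todo with
  | [::] => Some asg
  | t :: rest =>
    (fix tr (cs : seq nat) :=
       match cs with
       | [::] => None
       | c :: cs' =>
         if consistent M N inl t c asg then
           match dfs M N inl allowed rest ((t, c) :: asg) with
           | Some r => Some r
           | None => tr cs'
           end
         else tr cs'
       end) (allowed t)
  end.

Definition inner_listv (M N : nat) (Nv : seq (nat * nat)) : seq code :=
  [seq t <- [seq (k, v.1, v.2) | k <- [:: true; false], v <- Nv] | innerv M N Nv t.1.1 t.1.2 t.2].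

Definition gadget_asg (M N : nat) (Nv : seq (nat * nat)) (k0 : bool) (a b c : nat)
   : option (seq (code * nat)) :=
  let inl := inner_listv M N Nv in
  dfs M N inl (fun t => if t == (k0, a, b) then [:: c] else iota 0 5)
    ((k0, a, b) :: [seq t <- inl | t != (k0, a, b)]) [::].

Definition goodA (M N : nat) (Nv : seq (nat * nat)) (k0 : bool) (a b c : nat)
  (asg : seq (code * nat)) : bool :=
  [&& all (fun v => vproper M N (col_of M N asg) v.1 v.2) Nv,
      col_of M N asg k0 a b == c &
      all (fun p => (p.2 < 5) && innerv M N Nv p.1.1.1 p.1.1.2 p.1.2) asg].

Definition allgood (M N : nat) : bool :=
  all (fun t : code =>
    let Nv := Nverts M N t.1.1 t.1.2 t.2 in
    all (fun c => if gadget_asg M N Nv t.1.1 t.1.2 t.2 c is Some asg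
                  then goodA M N Nv t.1.1 t.1.2 t.2 c asg else false) (iota 0 5))
      (allcodes M N).

Definition Bok (M N : nat) : bool :=
  all (fun x => all (fun y => vproper M N (BB M N) x y) (iota 0 N)) (iota 0 M).

Definition sizes := [:: 3; 5; 7; 9].

Definition allsizes : bool :=
  all (fun M => all (fun N => allgood M N && Bok M N) sizes) sizes.


Lemma allsizes_true : allsizes = true.
Proof. vm_compute. reflexivity. Qed.


Definition rd (M : nat) := if M <= 7 then M else 9.
Definition kap (M a : nat) :=
  if M <= 7 then a else if a <= 3 then a else if M - 5 <= a then a + 9 - M
  else if a %% 2 == 1 then 3 else 4.
Definition off (M a x : nat) := (x + (M - a) + 2) %% M.
Definition psi (M a x : nat) := w (rd M) (kap M a) (off M a x).

Lemma w_lt M a d : 0 < M -> w M a d < M.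
Proof. by move=> h; rewrite /w ltn_pmod. Qed.

Lemma w2 M a : 2 <= M -> a < M -> w M a 2 = a.
Proof.
move=> hM ha; rewrite /w -addnA subnKC // -[X in _ = X](modn_small ha).
by rewrite modnDr.
Qed.

Lemma wS M a d : 2 <= M -> sc M (w M a d) = w M a d.+1.
Proof. by move=> hM; rewrite /sc /w -addn1 modnDml; congr (_ %% M); lia. Qed.

Lemma prw M a d : 2 <= M -> pr M (w M a d.+1) = w M a d.
Proof.
move=> hM; rewrite /pr /w modnDml; have ->: a + d.+1 + (M - 2) + M.-1 = (a + d + (M - 2)) + M by lia.
by rewrite modnDr.
Qed.

Lemma pr_w1 M x : 2 <= M -> pr M x = w M x 1.
Proof. by move=> hM; rewrite /pr /w; congr (_ %% M); lia. Qed.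

Lemma sc_pr M x : 2 <= M -> x < M -> sc M (pr M x) = x.
Proof. by move=> hM hx; rewrite pr_w1 // wS // w2. Qed.

Lemma pr_lt M x : 0 < M -> pr M x < M.
Proof. by move=> h; rewrite /pr ltn_pmod. Qed.

Lemma sc_lt M x : 0 < M -> sc M x < M.
Proof. by move=> h; rewrite /sc ltn_pmod. Qed.

Lemma w_inj M a d1 d2 : 6 <= M -> d1 < 6 -> d2 < 6 -> (w M a d1 == w M a d2) = (d1 == d2).
Proof.
move=> hM h1 h2; rewrite /w -!addnA [d1 + _]addnC [d2 + _]addnC !addnA.
rewrite (eqn_modDl (a + (M - 2))) !modn_small //; lia.
Qed.

Lemma mod_cases s M : 0 < M -> s < 3 * M ->
  (s %% M = s /\ s < M) \/ (s %% M = s - M /\ M <= s < 2 * M) \/ (s %% M = s - 2 * M /\ 2 * M <= s).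
Proof.
move=> hM hs.
case: (ltnP s M) => h1; first by left; rewrite modn_small.
case: (ltnP s (2 * M)) => h2.
  right; left; split; last by lia.
  have -> : s = (s - M) + M by lia.
  by rewrite modnDr modn_small; lia.
right; right; split; last by lia.
have -> : s = 2 * M + (s - 2 * M) by lia.
by rewrite modnMDl modn_small; lia.
Qed.


Lemma L_cls M a d : M %% 2 = 1 -> 3 <= M -> a < M -> d < 6 ->
  cls M (w M a d) = cls (rd M) (w (rd M) (kap M a) d).
Proof.
move=> hodd hM ha hd.
rewrite /rd /kap; case: ifP => hM7 //.
have hs : a + d + (M - 2) < 3 * M by lia.
have hM0 : 0 < M by lia.
case: ifP => ?; [|case: ifP => ?; [|case: ifP => ?]];
rewrite /w; have [[-> h]|[[-> h]|[-> h]]] := mod_cases hM0 hs;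
rewrite /cls; repeat (case: ifP => ?); lia.
Qed.

Lemma rd_ge M : 3 <= M -> 6 <= M -> 6 <= rd M.
Proof. by rewrite /rd; case: ifP; lia. Qed.

Lemma rd_pos M : 3 <= M -> 3 <= rd M.
Proof. by rewrite /rd; case: ifP; lia. Qed.

Lemma rd_sizes M : M %% 2 = 1 -> 3 <= M -> rd M \in sizes.
Proof.
move=> h1 h2; rewrite /rd /sizes; case: ifP => h3; last by [].
have : (M == 3) || (M == 5) || (M == 7) by lia.
by case/orP => [/orP [] | ] /eqP ->.
Qed.

Lemma kap_lt M a : 3 <= M -> a < M -> kap M a < rd M.
Proof. by rewrite /kap /rd; case: ifP => //; repeat (case: ifP); lia. Qed.

Lemma L_ident M a d1 d2 : 3 <= M -> d1 < 6 -> d2 < 6 ->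
  (w M a d1 == w M a d2) = (w (rd M) (kap M a) d1 == w (rd M) (kap M a) d2).
Proof.
move=> hM h1 h2; rewrite /rd /kap; case: ifP => hM7 //.
by rewrite !w_inj //; lia.
Qed.

Lemma w_off M a x : 2 <= M -> a < M -> x < M -> w M a (off M a x) = x.
Proof.
move=> hM ha hx; rewrite /w /off -addnA [_ %% M + _]addnC addnA modnDmr.
have -> : a + (M - 2) + (x + (M - a) + 2) = 2 * M + x by lia.
by rewrite modnMDl modn_small.
Qed.

Lemma off_w M a d : 6 <= M -> a < M -> d < 6 -> off M a (w M a d) = d.
Proof.
move=> hM ha hd; rewrite /w /off -addnA modnDml.
have -> : a + d + (M - 2) + (M - a + 2) = 2 * M + d by lia.
by rewrite modnMDl modn_small //; lia.
Qed.

Lemma L_psi M a d : 3 <= M -> a < M -> d < 6 -> psi M a (w M a d) = w (rd M) (kap M a) d.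
Proof.
move=> hM ha hd; rewrite /psi.
case: (leqP M 7) => hM7.
  have -> : rd M = M by rewrite /rd hM7.
  have -> : kap M a = a by rewrite /kap hM7.
  by rewrite w_off // ?w_lt //; lia.
by rewrite off_w //; lia.
Qed.


Lemma Bcol_lt k c1 c2 : Bcol k c1 c2 < 5.
Proof. by rewrite /Bcol; case: k; repeat case: ifP. Qed.

Lemma BB_lt M N k x y : BB M N k x y < 5.
Proof. exact: Bcol_lt. Qed.

Lemma mem_allcodes M N k x y : x < M -> y < N -> (k, x, y) \in allcodes M N.
Proof.
move=> hx hy; rewrite /allcodes.
apply: (@allpairs_f _ _ _ (fun k p => (k, p.1, p.2)) _ _ k (x, y)).
  by case: k.
by apply: allpairs_f; rewrite mem_iota; lia.
Qed.

Lemma col_of_BB M N asg k x y : (k, x, y) \notin [seq p.1 | p <- asg] ->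
  col_of M N asg k x y = BB M N k x y.
Proof.
move=> h; rewrite /col_of.
have -> : [seq p <- asg | p.1 == (k, x, y)] = [::].
  apply/eqP; rewrite -[_ == _]negbK -has_filter; apply/hasP => -[p hp /eqP hp1].
  by move/negP: h; apply; apply/mapP; exists p.
by [].
Qed.

Lemma col_of_lt M N asg k x y : all (fun p => p.2 < 5) asg -> col_of M N asg k x y < 5.
Proof.
move=> /allP h; rewrite /col_of.
case E: [seq p.2 | p <- asg & p.1 == (k, x, y)] => [|c s]; first exact: BB_lt.
have : c \in [seq p.2 | p <- asg & p.1 == (k, x, y)] by rewrite E inE eqxx.
case/mapP => p; rewrite mem_filter => /andP [_ hp] ->; exact: h.
Qed.

Definition smallcol (r1 r2 : nat) (k0 : bool) (a b c : nat) : bool -> nat -> nat -> nat :=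
  if gadget_asg r1 r2 (Nverts r1 r2 k0 a b) k0 a b c is Some asg then col_of r1 r2 asg else BB r1 r2.

Lemma small_good r1 r2 k0 a b c : r1 \in sizes -> r2 \in sizes -> a < r1 -> b < r2 -> c < 5 ->
  exists asg, gadget_asg r1 r2 (Nverts r1 r2 k0 a b) k0 a b c = Some asg /\
              goodA r1 r2 (Nverts r1 r2 k0 a b) k0 a b c asg.
Proof.
move=> h1 h2 ha hb hc.
have := allsizes_true; rewrite /allsizes => /allP /(_ _ h1) /allP /(_ _ h2) /andP [hg _].
rewrite /allgood in hg; move/allP: hg => hg; have /allP hc' := hg _ (mem_allcodes k0 ha hb).
have := hc' c; rewrite mem_iota add0n => /(_ hc).
by case: gadget_asg => // asg hA; exists asg.
Qed.

Lemma small_Bok r1 r2 x y : r1 \in sizes -> r2 \in sizes -> x < r1 -> y < r2 ->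
  vproper r1 r2 (BB r1 r2) x y.
Proof.
move=> h1 h2 hx hy.
have := allsizes_true; rewrite /allsizes => /allP /(_ _ h1) /allP /(_ _ h2) /andP [_ hb].
by move: hb; rewrite /Bok => /allP /(_ x); rewrite mem_iota => /(_ hx) /allP /(_ y);
  rewrite mem_iota => /(_ hy).
Qed.


Lemma SC r1 r2 k0 a b c : r1 \in sizes -> r2 \in sizes -> a < r1 -> b < r2 -> c < 5 ->
  [/\ forall v, v \in Nverts r1 r2 k0 a b -> vproper r1 r2 (smallcol r1 r2 k0 a b c) v.1 v.2,
      smallcol r1 r2 k0 a b c k0 a b = c,
      forall k x y, smallcol r1 r2 k0 a b c k x y < 5 &
      forall k x y, ~~ inner r1 r2 k0 a b k x y -> smallcol r1 r2 k0 a b c k x y = BB r1 r2 k x y].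
Proof.
move=> h1 h2 ha hb hc.
have [asg [E /and3P [hv /eqP hc' ha']]] := small_good k0 h1 h2 ha hb hc.
rewrite /smallcol E; split => //.
- by move=> v hv'; move/allP: hv => /(_ v hv').
- move=> k x y; apply: col_of_lt; apply/allP => p hp.
  by move/allP: ha' => /(_ p hp) /andP [].
- move=> k x y hin; apply: col_of_BB; apply/negP => /mapP [p hp hpe].
  move/allP: ha' => /(_ p hp) /andP [_]; rewrite -hpe /=.
  by move/negP: hin.
Qed.


Lemma BB_tr M N a b k d1 d2 : M %% 2 = 1 -> 3 <= M -> N %% 2 = 1 -> 3 <= N ->
  a < M -> b < N -> d1 < 6 -> d2 < 6 ->
  BB M N k (w M a d1) (w N b d2) =
  BB (rd M) (rd N) k (w (rd M) (kap M a) d1) (w (rd N) (kap N b) d2).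
Proof. by move=> hM hM3 hN hN3 ha hb h1 h2; rewrite /BB (L_cls hM hM3 ha h1) (L_cls hN hN3 hb h2). Qed.

Lemma Nv_tr M N k0 a b d1 d2 : 3 <= M -> 3 <= N -> d1 < 6 -> d2 < 6 ->
  ((w M a d1, w N b d2) \in Nverts M N k0 a b) =
  ((w (rd M) (kap M a) d1, w (rd N) (kap N b) d2) \in Nverts (rd M) (rd N) k0 (kap M a) (kap N b)).
Proof.
move=> hM hN h1 h2; rewrite /Nverts; case: k0; rewrite /= !inE !xpair_eqE;
by rewrite !(L_ident a hM h1) // !(L_ident b hN h2).
Qed.

Lemma inner_tr M N k0 a b k d1 d2 : 3 <= M -> 3 <= N -> d1 < 6 -> d2 < 6 ->
  (if k then d1 < 5 else d2 < 5) ->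
  inner M N k0 a b k (w M a d1) (w N b d2) =
  inner (rd M) (rd N) k0 (kap M a) (kap N b) k (w (rd M) (kap M a) d1) (w (rd N) (kap N b) d2).
Proof.
move=> hM hN h1 h2 hk; have hrM := rd_pos hM; have hrN := rd_pos hN.
rewrite /inner /innerv /ep2 (Nv_tr k0 a b hM hN h1 h2); congr (_ && _).
case: k hk => hk.
  by rewrite !wS; try lia; rewrite Nv_tr //; lia.
by rewrite !wS; try lia; rewrite Nv_tr //; lia.
Qed.

Definition bigG (M N : nat) (k0 : bool) (a b c : nat) (k : bool) (x y : nat) : nat :=
  if inner M N k0 a b k x y
  then smallcol (rd M) (rd N) k0 (kap M a) (kap N b) c k (psi M a x) (psi N b y)
  else BB M N k x y.

Lemma bigG_win M N k0 a b c k d1 d2 : M %% 2 = 1 -> 3 <= M -> N %% 2 = 1 -> 3 <= N ->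
  a < M -> b < N -> c < 5 -> d1 < 6 -> d2 < 6 -> (if k then d1 < 5 else d2 < 5) ->
  bigG M N k0 a b c k (w M a d1) (w N b d2) =
  smallcol (rd M) (rd N) k0 (kap M a) (kap N b) c k (w (rd M) (kap M a) d1) (w (rd N) (kap N b) d2).
Proof.
move=> hM hM3 hN hN3 ha hb hc h1 h2 hk.
rewrite /bigG (@inner_tr M N k0 a b k d1 d2 hM3 hN3 h1 h2 hk); case: ifP => hin.
  by rewrite (L_psi hM3 ha h1) (L_psi hN3 hb h2).
have [_ _ _ h4] := SC k0 (rd_sizes hM hM3) (rd_sizes hN hN3) (kap_lt hM3 ha) (kap_lt hN3 hb) hc.
by rewrite h4 ?hin // (@BB_tr M N a b k d1 d2 hM hM3 hN hN3 ha hb h1 h2).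
Qed.

Lemma Npat_bounds k0 d : d \in Npat k0 -> (0 < d.1 < 5) && (0 < d.2 < 5).
Proof. by move: d; case: k0 => -[d1 d2]; rewrite /Npat !inE !xpair_eqE /=; lia. Qed.

Lemma vproper_tr M N a b col r1 r2 a' b' col0 d1 d2 : 2 <= M -> 2 <= N -> 2 <= r1 -> 2 <= r2 ->
  (forall k e1 e2, e1 <= d1.+1 -> e2 <= d2.+1 ->
     col k (w M a e1) (w N b e2) = col0 k (w r1 a' e1) (w r2 b' e2)) ->
  vproper M N col (w M a d1.+1) (w N b d2.+1) = vproper r1 r2 col0 (w r1 a' d1.+1) (w r2 b' d2.+1).
Proof.
move=> hM hN h1 h2 H; rewrite /vproper !prw // !H //; lia.
Qed.

Lemma BB_vproper M N x y : M %% 2 = 1 -> 3 <= M -> N %% 2 = 1 -> 3 <= N -> x < M -> y < N ->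
  vproper M N (BB M N) x y.
Proof.
move=> hM hM3 hN hN3 hx hy.
have hr1 := rd_pos hM3; have hr2 := rd_pos hN3.
have H := @vproper_tr M N x y (BB M N) (rd M) (rd N) (kap M x) (kap N y) (BB (rd M) (rd N)) 1 1.
have hx' := kap_lt hM3 hx; have hy' := kap_lt hN3 hy.
rewrite (w2 _ hx) ?(w2 _ hy) ?(w2 _ hx') ?(w2 _ hy') in H; try lia.
rewrite H; try lia.
  apply: small_Bok => //; exact: rd_sizes.
by move=> k e1 e2 h1 h2; apply: BB_tr => //; lia.
Qed.

Lemma big_flex M N k0 a b c : M %% 2 = 1 -> 3 <= M -> N %% 2 = 1 -> 3 <= N ->
  a < M -> b < N -> c < 5 ->
  [/\ forall x y, x < M -> y < N -> vproper M N (bigG M N k0 a b c) x y,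
      bigG M N k0 a b c k0 a b = c,
      forall k x y, bigG M N k0 a b c k x y < 5 &
      forall k x y, ~~ inner M N k0 a b k x y -> bigG M N k0 a b c k x y = BB M N k x y].
Proof.
move=> hM hM3 hN hN3 ha hb hc.
have hr1 := rd_pos hM3; have hr2 := rd_pos hN3.
have ha' := kap_lt hM3 ha; have hb' := kap_lt hN3 hb.
have [S1 S2 S3 S4] := SC k0 (rd_sizes hM hM3) (rd_sizes hN hN3) ha' hb' hc.
split.
- move=> x y hx hy.
  case: (boolP ((x, y) \in Nverts M N k0 a b)) => hin.
    case/mapP: hin => d hd [-> ->].
    have /andP [/andP [d1a d1b] /andP [d2a d2b]] := Npat_bounds hd.
    move: d1a d1b d2a d2b hd; case: d => [[|e1] [|e2]] //= _ d1b _ d2b hd.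
    rewrite (@vproper_tr M N a b _ (rd M) (rd N) (kap M a) (kap N b)
               (smallcol (rd M) (rd N) k0 (kap M a) (kap N b) c) e1 e2); try lia.
      apply: (S1 (w (rd M) (kap M a) e1.+1, w (rd N) (kap N b) e2.+1)).
      by apply/mapP; exists (e1.+1, e2.+1).
    move=> k f1 f2 hf1 hf2; apply: bigG_win => //; try lia.
    by case: k; lia.
  have nin : forall k x' y', (x', y') = (x, y) \/ ep2 M N k x' y' = (x, y) ->
      ~~ inner M N k0 a b k x' y'.
    move=> k x' y' [] E; rewrite /inner /innerv; apply/negP => /andP [h1 h2].
      by move: hin; rewrite -E h1.
    by move: hin; rewrite -E h2.
  rewrite /vproper /bigG !ifN; try apply: nin.
  + exact: BB_vproper.
  + by right; rewrite /ep2 sc_pr //; lia.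
  + by left.
  + by right; rewrite /ep2 sc_pr //; lia.
  + by left.
- have hk : (if k0 then 2 < 5 else 2 < 5) by rewrite if_same.
  have := @bigG_win M N k0 a b c k0 2 2 hM hM3 hN hN3 ha hb hc isT isT hk.
  rewrite (w2 _ ha) ?(w2 _ hb) ?(w2 _ ha') ?(w2 _ hb'); try lia.
- move=> k x y; rewrite /bigG; case: ifP => _; [exact: S3 | exact: BB_lt].
- by move=> k x y hin; rewrite /bigG (negbTE hin).
Qed.


Lemma ord_pos M (a : 'I_M) : 0 < M.
Proof. by apply: leq_ltn_trans (ltn_ord a). Qed.

Definition osc M (a : 'I_M) : 'I_M := Ordinal (ltn_pmod a.+1 (ord_pos a)).
Definition opr M (a : 'I_M) : 'I_M := Ordinal (ltn_pmod (a + M.-1) (ord_pos a)).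

Definition ep2O M N (t : bool * 'I_M * 'I_N) : 'I_M * 'I_N :=
  if t.1.1 then (osc t.1.2, t.2) else (t.1.2, osc t.2).
Definition esetO M N (t : bool * 'I_M * 'I_N) : {set 'I_M * 'I_N} :=
  [set (t.1.2, t.2); ep2O t].
Definition incO M N (v : 'I_M * 'I_N) : seq (bool * 'I_M * 'I_N) :=
  [:: (true, v.1, v.2); (true, opr v.1, v.2); (false, v.1, v.2); (false, v.1, opr v.2)].

Definition adjn M x x' := (x' == sc M x) || (x == sc M x').
Definition cadj M N (u v : nat * nat) :=
  ((u.1 == v.1) && adjn N u.2 v.2) || ((u.2 == v.2) && adjn M u.1 v.1).

Lemma cart_adjE M N (u v : 'I_M * 'I_N) :
  cart_adj u v = cadj M N (val u.1, val u.2) (val v.1, val v.2).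
Proof. by []. Qed.

Lemma sc_w3 M x : 2 <= M -> x < M -> sc M x = w M x 3.
Proof. by move=> h hx; rewrite -{1}(w2 h hx) wS. Qed.

Lemma pr_sc M x : 2 <= M -> x < M -> pr M (sc M x) = x.
Proof. by move=> h hx; rewrite sc_w3 // prw // w2. Qed.

Lemma osc_opr M (a : 'I_M) : 2 <= M -> osc (opr a) = a.
Proof. by move=> h; apply: val_inj; exact: (sc_pr h (ltn_ord a)). Qed.

Lemma opr_osc M (a : 'I_M) : 2 <= M -> opr (osc a) = a.
Proof. by move=> h; apply: val_inj; exact: (pr_sc h (ltn_ord a)). Qed.

Lemma sc_neq M x : 2 <= M -> x < M -> (sc M x == x) = false.
Proof.
move=> h hx; rewrite /sc; case: (ltnP x.+1 M) => h1.
  by rewrite modn_small // eqn_leq ltnn.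
have -> : x.+1 = M by lia.
by rewrite modnn; lia.
Qed.

Lemma osc_neq M (a : 'I_M) : 2 <= M -> (osc a == a) = false.
Proof. by move=> h; rewrite -val_eqE; exact: (sc_neq h (ltn_ord a)). Qed.

Lemma sc2_neq M x : 3 <= M -> x < M -> (sc M (sc M x) == x) = false.
Proof.
move=> h hx; rewrite [sc M x]sc_w3 ?wS; try lia.
rewrite /w; have -> : x + 4 + (M - 2) = (x + 2) + M by lia.
rewrite modnDr; case: (ltnP (x + 2) M) => h1; first by rewrite modn_small //; lia.
have -> : x + 2 = (x + 2 - M) + M by lia.
rewrite modnDr modn_small; lia.
Qed.

Lemma Npat_rel M N k0 a b d : 2 <= M -> 2 <= N -> d \in Npat k0 ->
  let u := (w M a d.1, w N b d.2) in
  let e1 := (w M a 2, w N b 2) in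
  let e2 := if k0 then (w M a 3, w N b 2) else (w M a 2, w N b 3) in
  [|| u == e1, u == e2, cadj M N e1 u | cadj M N e2 u].
Proof.
move=> hM hN; move: d; case: k0; apply/allP;
by rewrite /= /cadj /adjn /= !wS // !eqxx /= ?orbT.
Qed.

Lemma pair_eq_val M N (z u : 'I_M * 'I_N) : (z == u) = ((val z.1, val z.2) == (val u.1, val u.2)).
Proof. by case: z u => [z1 z2] [u1 u2]; rewrite !xpair_eqE. Qed.

Lemma inN_rel M N (t : bool * 'I_M * 'I_N) (u : 'I_M * 'I_N) : 2 <= M -> 2 <= N ->
  inN M N t.1.1 t.1.2 t.2 (val u.1) (val u.2) ->
  exists2 z, z \in esetO t & (z == u) || cart_adj z u.
Proof.
move=> hM hN; case: t => [[k0 a] b] /=; rewrite /inN => /mapP [d hd E].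
have := Npat_rel a b hM hN hd; rewrite /= -E (w2 hM (ltn_ord a)) (w2 hN (ltn_ord b)).
rewrite -(sc_w3 hM (ltn_ord a)) -(sc_w3 hN (ltn_ord b)).
have E1 : (val (a, b).1, val (a, b).2) = (val a, val b) by [].
have E2 : (val (ep2O (k0, a, b)).1, val (ep2O (k0, a, b)).2) =
          (if k0 then (sc M a, val b) else (val a, sc N b)) by destruct k0.
case/or4P => H.
- exists (a, b); first by rewrite !inE eqxx.
  by rewrite pair_eq_val eq_sym E1 H.
- exists (ep2O (k0, a, b)); first by rewrite !inE eqxx orbT.
  by rewrite pair_eq_val eq_sym E2 H.
- exists (a, b); first by rewrite !inE eqxx.
  by rewrite cart_adjE E1 H orbT.
- exists (ep2O (k0, a, b)); first by rewrite !inE eqxx orbT.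
  by rewrite cart_adjE E2 H orbT.
Qed.

Lemma osc_of M (i j : 'I_M) : val j = sc M i -> j = osc i.
Proof. by move=> h; apply: val_inj. Qed.

Lemma is_edgeO M N (e : {set 'I_M * 'I_N}) : is_edge (@cart_adj M N) e -> exists t, e = esetO t.
Proof.
move=> /existsP [x /existsP [y /andP [hxy /eqP ->]]].
case: x y hxy => [x1 x2] [y1 y2]; rewrite /cart_adj /cyc_adj /=.
case/orP => /andP [/eqP E /orP [/eqP H | /eqP H]]; subst.
- by exists (false, y1, x2); rewrite /esetO /ep2O /= -(osc_of H).
- by exists (false, y1, y2); rewrite /esetO /ep2O /= -(osc_of H) setUC.
- by exists (true, x1, y2); rewrite /esetO /ep2O /= -(osc_of H).
- by exists (true, y1, y2); rewrite /esetO /ep2O /= -(osc_of H) setUC.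
Qed.

Lemma esetO_edge M N (t : bool * 'I_M * 'I_N) : 2 <= M -> 2 <= N ->
  is_edge (@cart_adj M N) (esetO t).
Proof.
move=> hM hN; apply/existsP; exists (t.1.2, t.2); apply/existsP; exists (ep2O t).
rewrite eqxx andbT cart_adjE /ep2O; case: t => [[k a] b] /=.
by case: k; rewrite /cadj /adjn /= !eqxx ?orbT.
Qed.

Lemma incO_of M N (t : bool * 'I_M * 'I_N) v : 2 <= M -> 2 <= N -> v \in esetO t -> t \in incO v.
Proof.
move=> hM hN; case: t => [[k a] b]; rewrite /esetO !inE => /orP [/eqP -> | /eqP ->];
  case: k; rewrite /incO /ep2O /= ?opr_osc // ?inE ?eqxx ?orbT //.
Qed.


Lemma inv_even (T : finType) (f : T -> T) : involutive f -> (forall x, f x != x) -> ~~ odd #|T|.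
Proof.
move=> finv fne.
pose A := [set x | enum_rank x < enum_rank (f x)].
have E : f @: A = ~: A.
  apply/setP => y; rewrite !inE; apply/imsetP/idP.
    move=> [x]; rewrite inE => hx ->; rewrite finv -leqNgt; exact: ltnW.
  rewrite -leqNgt => hy; exists (f y); last by rewrite finv.
  rewrite inE finv ltn_neqAle hy andbT.
  apply/negP => /eqP /val_inj /enum_rank_inj h.
  by move: (fne y); rewrite h eqxx.
have := cardsC A; rewrite -E card_imset; last exact: inv_inj.
by move=> <-; rewrite addnn odd_double.
Qed.

Lemma cart_adj_sym M N (u v : 'I_M * 'I_N) : cart_adj u v = cart_adj v u.
Proof. by rewrite /cart_adj /cyc_adj [u.1 == _]eq_sym [u.2 == _]eq_sym [(_ == _.+1 %% N) || _]orbC [(_ == _.+1 %% M) || _]orbC. Qed.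

Lemma cart_adj_irr M N (u : 'I_M * 'I_N) : 2 <= M -> 2 <= N -> cart_adj u u = false.
Proof.
move=> hM hN; rewrite cart_adjE /cadj /adjn !eqxx /=.
by rewrite ![_ == sc _ _]eq_sym !(sc_neq hN (ltn_ord _)) !(sc_neq hM (ltn_ord _)).
Qed.

Lemma opr_neq M (a : 'I_M) : 2 <= M -> (opr a == a) = false.
Proof.
move=> h; apply/negP => /eqP E.
by move: (osc_neq a h); rewrite -{1}E osc_opr // eqxx.
Qed.

Lemma osc_opr_neq M (a : 'I_M) : 3 <= M -> (osc a == opr a) = false.
Proof.
move=> h; apply/negP => /eqP E.
have : osc (osc a) = a by rewrite E osc_opr //; lia.
move/(congr1 val) => /= /eqP; rewrite (sc2_neq h (ltn_ord a)) //.
Qed.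

Definition nb M N (v : 'I_M * 'I_N) : seq ('I_M * 'I_N) :=
  [:: (osc v.1, v.2); (opr v.1, v.2); (v.1, osc v.2); (v.1, opr v.2)].

Lemma nb_uniq M N (v : 'I_M * 'I_N) : 3 <= M -> 3 <= N -> uniq (nb v).
Proof.
move=> hM hN; have hM2 : 2 <= M by lia. have hN2 : 2 <= N by lia.
rewrite /nb /= !inE !xpair_eqE !eqxx /= !osc_neq // !opr_neq // !osc_opr_neq //.
Qed.

Lemma nb_adj M N (v w : 'I_M * 'I_N) : 2 <= M -> 2 <= N -> w \in nb v -> cart_adj v w.
Proof.
move=> hM hN; rewrite /nb !inE => /or4P [] /eqP ->; rewrite cart_adjE /cadj /adjn /= !eqxx /=.
- by rewrite orbT.
- by rewrite (sc_pr hM (ltn_ord _)) eqxx !orbT.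
- by [].
- by rewrite (sc_pr hN (ltn_ord _)) eqxx !orbT.
Qed.

Lemma nb_notin M N (v : 'I_M * 'I_N) : 2 <= M -> 2 <= N -> v \notin nb v.
Proof.
move=> hM hN; apply/negP => /(nb_adj hM hN); by rewrite cart_adj_irr.
Qed.

Lemma chi_ge5 M N chi : M %% 2 = 1 -> N %% 2 = 1 -> 3 <= M -> 3 <= N ->
  is_chromatic_index (@cart_adj M N) chi -> 5 <= chi.
Proof.
move=> hoM hoN hM3 hN3 [[cc [hpr hsz]] _].
have hM : 2 <= M by lia. have hN : 2 <= N by lia.
rewrite leqNgt; apply/negP => hlt.
set L := undup [seq cc e | e <- enum (edges (@cart_adj M N))] in hsz.
have hL : size L <= 4 by lia.
have edge_of : forall v w, cart_adj v w -> is_edge (@cart_adj M N) [set v; w].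
  by move=> v w h; apply/existsP; exists v; apply/existsP; exists w; rewrite h eqxx.
have inL : forall v w, cart_adj v w -> cc [set v; w] \in L.
  move=> v w h; rewrite mem_undup; apply: map_f; rewrite mem_enum inE; exact: edge_of.
have dist : forall v w w', cart_adj v w -> cart_adj v w' -> w != w' ->
    cc [set v; w] != cc [set v; w'].
  move=> v w w' h1 h2 hne; apply: hpr; try exact: edge_of.
    apply/negP => /eqP E.
    have : w' \in [set v; w] by rewrite E !inE eqxx orbT.
    rewrite !inE => /orP [/eqP E' | /eqP E'].
      by move: h2; rewrite E' cart_adj_irr.
    by move: hne; rewrite E' eqxx.
  by apply/set0Pn; exists v; rewrite !inE eqxx.
have cs_uniq : forall v, uniq [seq cc [set v; w] | w <- nb v].
  move=> v; rewrite map_inj_in_uniq; first exact: nb_uniq.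
  move=> w w' hw hw' E; case: (eqVneq w w') => // hne.
  by move: (dist v w w' (nb_adj hM hN hw) (nb_adj hM hN hw') hne); rewrite E eqxx.
pose v0 : 'I_M * 'I_N := (Ordinal (ltnW hM), Ordinal (ltnW hN)).
pose g := cc [set v0; (osc v0.1, v0.2)].
have gL : g \in L.
  apply: inL; apply: (nb_adj hM hN); rewrite /nb !inE eqxx //.
have gat : forall v, g \in [seq cc [set v; w] | w <- nb v].
  move=> v; apply: contraT => hn.
  have : size (g :: [seq cc [set v; w] | w <- nb v]) <= size L.
    apply: uniq_leq_size; first by rewrite cons_uniq hn cs_uniq.
    move=> x; rewrite inE => /orP [/eqP -> // | /mapP [w hw ->]].
    apply: inL; exact: nb_adj hw.
  by rewrite /nb /= => h; move: (leq_trans h hL).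
pose f v := odflt v [pick w | cart_adj v w && (cc [set v; w] == g)].
have fP : forall v, cart_adj v (f v) && (cc [set v; f v] == g).
  move=> v; rewrite /f; case: pickP => [w -> // | H].
  case/mapP: (gat v) => w hw E.
  by move: (H w); rewrite (nb_adj hM hN hw) -E eqxx.
have funiq : forall v w, cart_adj v w -> cc [set v; w] = g -> w = f v.
  move=> v w h E; case: (eqVneq w (f v)) => // hne.
  have /andP [h1 /eqP h2] := fP v.
  by move: (dist v w (f v) h h1 hne); rewrite E h2 eqxx.
have finv : involutive f.
  move=> v; apply/esym; apply: funiq.
    by rewrite cart_adj_sym; case/andP: (fP v).
  by rewrite setUC; case/andP: (fP v) => _ /eqP.
have fne : forall v, f v != v.
  move=> v; apply/negP => /eqP E; have /andP [h _] := fP v.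
  by move: h; rewrite E cart_adj_irr.
have := inv_even finv fne.
have oM : odd M by move: hoM; rewrite modn2; case: (odd M).
have oN : odd N by move: hoN; rewrite modn2; case: (odd N).
by rewrite card_prod !card_ord oddM oM oN.
Qed.


Lemma uniq_map_in (T1 T2 : eqType) (f : T1 -> T2) s x y :
  uniq (map f s) -> x \in s -> y \in s -> f x = f y -> x = y.
Proof.
elim: s => //= a s IH /andP [ha hu]; rewrite !inE => /orP [/eqP -> | hx] /orP [/eqP -> | hy] E //.
- by move: ha; rewrite E (map_f f hy).
- by move: ha; rewrite -E (map_f f hx).
- exact: IH.
Qed.

Lemma le_foldr_max s x : x \in s -> x <= foldr maxn 0 s.
Proof.
elim: s => //= a s IH; rewrite inE => /orP [/eqP -> | h]; first exact: leq_maxl.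
by apply: leq_trans (IH h) (leq_maxr _ _).
Qed.

Lemma palette (S : seq nat) : uniq S -> size S <= 5 ->
  exists P : seq nat, [/\ uniq P, size P = 5 & {subset S <= P}].
Proof.
move=> hu hs; pose m0 := (foldr maxn 0 S).+1.
exists (take 5 (S ++ iota m0 5)); split.
- apply: take_uniq; rewrite cat_uniq hu iota_uniq andbT.
  apply/hasPn => x; rewrite mem_iota => /andP [h1 _]; apply/negP => h2.
  by move: (le_foldr_max h2); rewrite /m0 in h1; lia.
- by rewrite size_take size_cat size_iota; case: ifP => //; lia.
- move=> x hx; rewrite take_cat; case: ifP => h; first by lia.
  by rewrite mem_cat hx.
Qed.

Lemma center_inner M N k0 a b : 2 <= M -> 2 <= N -> a < M -> b < N -> inner M N k0 a b k0 a b.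
Proof.
move=> hM hN ha hb; rewrite /inner /innerv /ep2; apply/andP; split.
  apply/mapP; exists (2, 2); first by case: k0.
  by rewrite /= !w2.
case: k0.
  by apply/mapP; exists (3, 2) => //; rewrite /= sc_w3 // w2.
by apply/mapP; exists (2, 3) => //; rewrite /= sc_w3 // w2.
Qed.

Lemma dist_le2 M N (z z' u : 'I_M * 'I_N) : (z == u) || cart_adj z u -> (z' == u) || cart_adj z' u ->
  dist_le (@cart_adj M N) 2 z z'.
Proof.
move=> /orP [/eqP -> | h1] /orP [/eqP -> | h2] /=.
- by rewrite eqxx.
- apply/orP; left; apply/orP; right; apply/existsP; exists z'.
  by rewrite cart_adj_sym h2 eqxx.
- apply/orP; left; apply/orP; right; apply/existsP; exists u.
  by rewrite h1 eqxx.
- apply/orP; right; apply/existsP; exists u; rewrite h1 /=.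
  apply/orP; right; apply/existsP; exists z'; by rewrite cart_adj_sym h2 eqxx.
Qed.

Lemma main_gen M N chi (E0 : {set {set 'I_M * 'I_N}}) (p : {set 'I_M * 'I_N} -> nat) :
  M %% 2 = 1 -> 3 <= M -> N %% 2 = 1 -> 3 <= N -> 5 <= chi ->
  (forall e, e \in E0 -> is_edge (@cart_adj M N) e) ->
  size (undup [seq p e | e <- enum E0]) <= 5 ->
  (forall e f, e \in E0 -> f \in E0 -> e != f -> edge_dist_ge (@cart_adj M N) 3 e f) ->
  exists c : {set 'I_M * 'I_N} -> nat,
    [/\ proper_edge_coloring (@cart_adj M N) c,
        size (undup [seq c e | e <- enum (edges (@cart_adj M N))]) <= chi &
        forall e, e \in E0 -> c e = p e].
Proof.
move=> hoM hM3 hoN hN3 hchi hE0 hcol hdist.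
have hM : 2 <= M by lia. have hN : 2 <= N by lia.
have [P [Pu Ps PS]] := palette (undup_uniq [seq p e | e <- enum E0]) hcol.
pose pal i := nth 0 P i.
pose t0 : bool * 'I_M * 'I_N := (true, Ordinal (ltnW hM), Ordinal (ltnW hN)).
pose code (e : {set 'I_M * 'I_N}) := odflt t0 [pick t | esetO t == e].
have codeP : forall e, is_edge (@cart_adj M N) e -> esetO (code e) = e.
  move=> e /is_edgeO [t Et]; rewrite /code; case: pickP => [t' /eqP // | H].
  by move: (H t); rewrite Et eqxx.
pose ci e := index (p e) P.
have pE0 : forall e, e \in E0 -> p e \in P.
  move=> e he; apply: PS; rewrite mem_undup; apply: map_f; by rewrite mem_enum.
have ci_lt : forall e, e \in E0 -> ci e < 5.
  by move=> e he; rewrite -Ps index_mem pE0.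
pose ci' e := if e \in E0 then ci e else 0.
have ci'_lt : forall e, ci' e < 5 by move=> e; rewrite /ci'; case: ifP => // /ci_lt.
pose G e := bigG M N (code e).1.1 (code e).1.2 (code e).2 (ci' e).
have GP : forall e, [/\ forall x y, x < M -> y < N -> vproper M N (G e) x y,
      G e (code e).1.1 (code e).1.2 (code e).2 = ci' e,
      forall k x y, G e k x y < 5 &
      forall k x y, ~~ inner M N (code e).1.1 (code e).1.2 (code e).2 k x y -> G e k x y = BB M N k x y].
  by move=> e; apply: big_flex.
pose inNe e x y := inN M N (code e).1.1 (code e).1.2 (code e).2 x y.
have disj : forall e e' (u : 'I_M * 'I_N), e \in E0 -> e' \in E0 ->
    inNe e (val u.1) (val u.2) -> inNe e' (val u.1) (val u.2) -> e = e'.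
  move=> e e' u he he' h1 h2; case: (eqVneq e e') => // hne.
  have := hdist e e' he he' hne; rewrite /edge_dist_ge /=.
  have [z hz Hz] := inN_rel hM hN h1; have [z' hz' Hz'] := inN_rel hM hN h2.
  rewrite codeP ?hE0 // in hz; rewrite codeP ?hE0 // in hz'.
  move/forallP => /(_ z); rewrite hz /= => /forallP /(_ z'); rewrite hz' /=.
  by move/negP => H; exfalso; apply: H; exact: (dist_le2 Hz Hz').
pose colF k x y := if [pick e in E0 | inner M N (code e).1.1 (code e).1.2 (code e).2 k x y] is Some e
                  then G e k x y else BB M N k x y.
have colF_lt : forall k x y, colF k x y < 5.
  move=> k x y; rewrite /colF; case: pickP => [e _ | _]; last exact: BB_lt.
  by have [_ _ H _] := GP e; apply: H.
have colF_at : forall x y, x < M -> y < N -> forall k x' y',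
    ((x', y') = (x, y) \/ ep2 M N k x' y' = (x, y)) ->
    colF k x' y' = if [pick e in E0 | inNe e x y] is Some e then G e k x' y' else BB M N k x' y'.
  move=> x y hx hy k x' y' Hd.
  have inu : forall e, inner M N (code e).1.1 (code e).1.2 (code e).2 k x' y' -> inNe e x y.
    move=> e; rewrite /inner /innerv => /andP [h1 h2].
    case: Hd => [[<- <-] // | E].
    by move: h2; rewrite E.
  rewrite /colF; case: pickP => [e /andP [he hin] | hn]; case: pickP => [e' /andP [he' hin'] | hn'].
  - by rewrite (disj e e' (Ordinal hx, Ordinal hy) he he' (inu e hin) hin').
  - by move: (hn' e); rewrite he (inu e hin).
  - have [_ _ _ H] := GP e'; rewrite H //.
    by move: (hn e'); rewrite he' => /negbT.
  - by [].
have colF_vp : forall x y, x < M -> y < N -> vproper M N colF x y.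
  move=> x y hx hy; rewrite /vproper.
  rewrite (colF_at x y hx hy true x y (or_introl erefl)).
  rewrite (colF_at x y hx hy true (pr M x) y); last by right; rewrite /ep2 sc_pr.
  rewrite (colF_at x y hx hy false x y (or_introl erefl)).
  rewrite (colF_at x y hx hy false x (pr N y)); last by right; rewrite /ep2 sc_pr.
  case: pickP => [e _ | _]; last exact: BB_vproper.
  by have [H _ _ _] := GP e; apply: H.
have colF_E0 : forall e, e \in E0 -> colF (code e).1.1 (code e).1.2 (code e).2 = ci e.
  move=> e he; rewrite /colF; case: pickP => [e' /andP [he' hin] | hn].
    have ce := center_inner (code e).1.1 hM hN (ltn_ord (code e).1.2) (ltn_ord (code e).2).
    move: hin ce; rewrite /inner /innerv => /andP [h1 _] /andP [h2 _].
    rewrite -(disj e e' ((code e).1.2, (code e).2) he he' h2 h1).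
    by have [_ H _ _] := GP e; rewrite H /ci' he.
  move: (hn e); rewrite he /=.
  by rewrite center_inner.
pose c S := pal (colF (code S).1.1 (code S).1.2 (code S).2).
exists c; split.
- move=> e f he hf hne hef.
  case/set0Pn: hef => v; rewrite inE => /andP [hve hvf].
  have ie : code e \in incO v by apply: incO_of; rewrite ?codeP.
  have if' : code f \in incO v by apply: incO_of; rewrite ?codeP.
  have U : uniq [seq colF t.1.1 (val t.1.2) (val t.2) | t : bool * 'I_M * 'I_N <- incO v].
    exact: (colF_vp (val v.1) (val v.2) (ltn_ord _) (ltn_ord _)).
  rewrite /c /pal nth_uniq ?Ps ?colF_lt //.
  apply/negP => /eqP E.
  have := uniq_map_in U ie if' E => Ecf.
  by move: hne; rewrite -(codeP e he) -(codeP f hf) Ecf eqxx.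
- apply: leq_trans hchi; rewrite -Ps; apply: uniq_leq_size; first exact: undup_uniq.
  move=> x; rewrite mem_undup => /mapP [S _ ->].
  by rewrite /c /pal mem_nth // Ps colF_lt.
- by move=> e he; rewrite /c colF_E0 // /pal /ci nth_index // pE0.
Qed.


Theorem theorem4 (k l : nat) (hk : 1 <= k) (hl : 1 <= l) (chi : nat)
  (hchi : is_chromatic_index (@cart_adj (2 * k + 1) (2 * l + 1)) chi)
  (E0 : {set {set 'I_(2 * k + 1) * 'I_(2 * l + 1)}})
  (p : {set 'I_(2 * k + 1) * 'I_(2 * l + 1)} -> nat)
  (hE0 : forall e, e \in E0 -> is_edge (@cart_adj (2 * k + 1) (2 * l + 1)) e)
  (hcol : size (undup [seq p e | e <- enum E0]) <= 5)
  (hdist : forall e f, e \in E0 -> f \in E0 -> e != f ->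
       edge_dist_ge (@cart_adj (2 * k + 1) (2 * l + 1)) 3 e f) :
  exists c : {set 'I_(2 * k + 1) * 'I_(2 * l + 1)} -> nat,
    [/\ proper_edge_coloring (@cart_adj (2 * k + 1) (2 * l + 1)) c,
        size (undup [seq c e | e <- enum (edges (@cart_adj (2 * k + 1) (2 * l + 1)))]) <= chi &
        forall e, e \in E0 -> c e = p e].
Proof.
have hoM : (2 * k + 1) %% 2 = 1 by lia.
have hoN : (2 * l + 1) %% 2 = 1 by lia.
have hM3 : 3 <= 2 * k + 1 by lia.
have hN3 : 3 <= 2 * l + 1 by lia.
have h5 := chi_ge5 hoM hoN hM3 hN3 hchi.
exact: (main_gen hoM hM3 hoN hN3 h5 hE0 hcol hdist).
Qed.
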